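(* Let $n\geq 3$, $k\in\mathbb{Z}_n$ with $k\neq 0$ and $2k\not\equiv 0\pmod n$, and let $C$ be a perfect code in $\mathrm{GP}(n,k)$. Then $|C\cap U|=|C\cap V|=\frac{n}{4}$; in particular $n\equiv 0\pmod 4$.
   Context: For an integer $n\geq 3$ and a nonzero $k\in\mathbb{Z}_n$, the generalized Petersen graph $\mathrm{GP}(n,k)$ is the simple graph with vertex set $\{u_i,v_i\mid i\in\mathbb{Z}_n\}$ and edges $u_iu_{i+1}$, $u_iv_i$, $v_iv_{i+k}$ for all $i\in\mathbb{Z}_n$ (indices modulo $n$). Let $U=\{u_i\mid i\in\mathbb{Z}_n\}$ and $V=\{v_i\mid i\in\mathbb{Z}_n\}$. A perfect code in a graph $\Gamma$ is an independent set $C\subseteq V(\Gamma)$ such that every vertex not in $C$ is adjacent to exactly one vertex of $C$. *)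

(* Defs.v *)
From mathcomp Require Import all_boot.
Set Implicit Arguments. Unset Strict Implicit. Unset Printing Implicit Defensive.

(* Vertices of GP(n,k): (false, i) = u_i, (true, i) = v_i, i : 'I_n = Z_n. *)
Definition gp_vertex (n : nat) := (bool * 'I_n)%type.

Definition step (n d : nat) (i j : 'I_n) : bool := (i + d) %% n == j.
Arguments step : clear implicits.

Definition gp_adj (n k : nat) (x y : gp_vertex n) : bool :=
  match x, y with
  | (false, i), (false, j) => step n 1 i j || step n 1 j i
  | (true, i), (true, j) => step n k i j || step n k j i
  | (false, i), (true, j) => i == j
  | (true, i), (false, j) => i == j
  end.

Arguments gp_adj : clear implicits.
Definition U (n : nat) : {set gp_vertex n} := [set x | ~~ x.1].
Definition V (n : nat) : {set gp_vertex n} := [set x | x.1].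

Definition perfect_code (n k : nat) (C : {set gp_vertex n}) : Prop :=
  (forall x y, x \in C -> y \in C -> ~~ gp_adj n k x y) /\
  (forall x, x \notin C -> #|[set y in C | gp_adj n k x y]| = 1).
Arguments perfect_code : clear implicits.

(* Main.v *)
Require Import Defs.
From mathcomp Require Import all_boot zify.

Lemma de0 n d : 0 < n -> (d + (n - d %% n)) %% n = 0.
Proof.
move=> n0; rewrite -modnDml subnKC ?modnn //.
by apply: ltnW; rewrite ltn_pmod.
Qed.

Lemma nostep n (i : 'I_n) x : (i + x) %% n == i -> x %% n == 0.
Proof.
move=> /eqP h; rewrite -(mod0n n) -(eqn_modDl i) addn0 h.
by rewrite modn_small.
Qed.

Lemma card3 n d (i : 'I_n) (n0 : 0 < n) : d %% n != 0 -> (2*d) %% n != 0 ->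
 #|[set j : 'I_n | (j == i) || step n d i j || step n d j i]| = 3.
Proof.
move=> d0 d20.
pose a : 'I_n := Ordinal (ltn_pmod (i + d) n0).
pose b : 'I_n := Ordinal (ltn_pmod (i + (n - d %% n)) n0).
have hA j : step n d i j = (j == a).
  rewrite /step; apply/eqP/eqP => [h|->]; last by [].
  by apply: val_inj; rewrite /= h.
have hB j : step n d j i = (j == b).
  rewrite /step; apply/eqP/eqP => [h|->].
    apply: val_inj => /=.
    by rewrite -h modnDml -addnA -modnDmr de0 // addn0 modn_small.
  by rewrite /= modnDml -addnA (addnC _ d) -modnDmr de0 // addn0 modn_small.
have -> : [set j : 'I_n | (j == i) || step n d i j || step n d j i] = [set i; a; b].
  by apply/setP => j; rewrite !inE hA hB.
have nii : ~~ step n d i i.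
  by apply/negP => /nostep; rewrite (negbTE d0).
rewrite -setUA cardsU1 cards2 !inE -hA -hB (negbTE nii) /= -hB.
rewrite /step /= modnDml -addnA addnn -mul2n.
suff -> : ((i + 2 * d) %% n != i) by []. by apply/negP => /nostep; rewrite (negbTE d20).
Qed.

Lemma gp_adj_sym n k x y : gp_adj n k x y = gp_adj n k y x.
Proof. by case: x => [[] i]; case: y => [[] j] /=; rewrite 1?orbC // eq_sym. Qed.

Lemma cardsum (T : finType) (A : {set T}) (Q : pred T) :
  #|[set c in A | Q c]| = \sum_(c in A) Q c.
Proof.
rewrite -sum1_card (eq_bigl (fun c => (c \in A) && Q c)); last by move=> c; rewrite !inE.
by rewrite big_mkcondr; apply: eq_bigr => c _; case: (Q c).
Qed.

Lemma cardW n (b : bool) (Q : pred (gp_vertex n)) :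
  #|[set x | (x.1 == b) && Q x]| = #|[set j : 'I_n | Q (b, j)]|.
Proof.
have inj : injective (fun j : 'I_n => (b, j) : gp_vertex n) by move=> ?? [].
rewrite -(card_imset _ inj).
apply: eq_card; move=> -[c j]; rewrite !inE /=.
case: (eqVneq c b) => [->|ne] /=.
  apply/esym; case Qj: (Q (b, j)); last first.
    by apply/negbTE/negP => /imsetP [j' Hj' [e]]; rewrite inE -e Qj in Hj'.
  by apply/imsetP; exists j; rewrite ?inE.
by apply/esym/negbTE/negP => /imsetP [j' _ [e]]; rewrite e eqxx in ne.
Qed.

Lemma cardU n (Q : pred (gp_vertex n)) :
  #|[set x in U n | Q x]| = #|[set j : 'I_n | Q (false, j)]|.
Proof.
rewrite -cardW; apply: eq_card; move=> -[c j]; rewrite !inE /=.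
by case: c.
Qed.

Lemma cardV n (Q : pred (gp_vertex n)) :
  #|[set x in V n | Q x]| = #|[set j : 'I_n | Q (true, j)]|.
Proof.
rewrite -cardW; apply: eq_card; move=> -[c j]; rewrite !inE /=.
by case: c.
Qed.

Section Main.
Variables (n : nat) (k : 'I_n) (C : {set gp_vertex n}).
Hypotheses (n3 : 3 <= n) (k0 : (k : nat) != 0) (k2 : (2 * (k : nat)) %% n != 0)
  (pc : perfect_code n (k : nat) C).

Let P x c := (x == c) || gp_adj n k x c.

Lemma dom1 x : #|[set c in C | P x c]| = 1.
Proof.
case: pc => H1 H2.
case: (boolP (x \in C)) => xC.
  rewrite -(cards1 x); apply: eq_card; move=> c; rewrite !inE /P.
  case: (eqVneq c x) => [->|ne]; rewrite ?xC ?eqxx //=.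
  by case cC: (c \in C) => //=; apply/negbTE/H1.
rewrite -(H2 x xC); apply: eq_card; move=> c; rewrite !inE /P.
case cC: (c \in C) => //=.
have /negbTE -> // : x != c by apply: contraNneq xC => ->.
Qed.

Let n0 : 0 < n. Proof. by apply: leq_trans n3. Qed.

Lemma nbU c : #|[set x in U n | P x c]| = if c.1 then 1 else 3.
Proof.
rewrite cardU; case: c => [[] i] /=.
  rewrite -(cards1 i); apply: eq_card; move=> j; rewrite !inE /P /=.
  by [].
rewrite -(@card3 n 1 i n0); last 2 first.
- by rewrite modn_small // (leq_trans _ n3).
- by rewrite modn_small // (leq_trans _ n3).
apply: eq_card; move=> j; rewrite !inE /P /=.
have -> : (((false, j) : gp_vertex n) == (false, i)) = (j == i) by apply/eqP/eqP => [[]|->].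
by rewrite -orbA (orbC (step _ _ j i)).
Qed.

Lemma nbV c : #|[set x in V n | P x c]| = if c.1 then 3 else 1.
Proof.
rewrite cardV; case: c => [[] i] /=; last first.
  rewrite -(cards1 i); apply: eq_card; move=> j; rewrite !inE /P /=.
  by [].  
rewrite -(@card3 n k i n0) //; last by rewrite modn_small.
apply: eq_card; move=> j; rewrite !inE /P /=.
have -> : (((true, j) : gp_vertex n) == (true, i)) = (j == i) by apply/eqP/eqP => [[]|->].
by rewrite -orbA (orbC (step _ _ j i)).
Qed.

Lemma countW (W : {set gp_vertex n}) (f : bool -> nat) :
  (forall c, #|[set x in W | P x c]| = f c.1) ->
  #|W| = f false * #|C :&: U n| + f true * #|C :&: V n|.
Proof.
move=> hf.
rewrite -sum1_card.
transitivity (\sum_(x in W) \sum_(c in C) (P x c : nat)).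
  by apply: eq_bigr => x _; rewrite -(@cardsum _ C (P x)) dom1.
rewrite exchange_big.
transitivity (\sum_(c in C) f c.1).
  by apply: eq_bigr => c _; rewrite -(@cardsum _ W (fun x => P x c)) hf.
rewrite (bigID (fun c : gp_vertex n => c.1)) /= addnC.
rewrite (eq_bigl (fun c => c \in C :&: U n)); last by move=> c; rewrite !inE.
rewrite [X in _ + X](eq_bigl (fun c => c \in C :&: V n)); last by move=> c; rewrite !inE.
rewrite (eq_bigr (fun=> f false)); last by move=> c /setIP [_]; rewrite inE => /negbTE ->.
rewrite [X in _ + X](eq_bigr (fun=> f true)); last by move=> c /setIP [_]; rewrite inE => ->.
by rewrite !sum_nat_const mulnC [f true * _]mulnC.
Qed.

Lemma final : 4 * #|C :&: U n| = n /\ 4 * #|C :&: V n| = n /\ n %% 4 = 0.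
Proof.
have cU : #|U n| = n.
  transitivity #|[set j : 'I_n | xpredT (false, j)]|.
    by rewrite -(@cardU n xpredT); apply: eq_card; move=> x; rewrite !inE andbT.
  by rewrite -[RHS]card_ord; apply: eq_card; move=> j; rewrite inE.
have cV : #|V n| = n.
  transitivity #|[set j : 'I_n | xpredT (true, j)]|.
    by rewrite -(@cardV n xpredT); apply: eq_card; move=> x; rewrite !inE andbT.
  by rewrite -[RHS]card_ord; apply: eq_card; move=> j; rewrite inE.
have eU := countW (U n) (fun b => if b then 1 else 3) nbU.
have eV := countW (V n) (fun b => if b then 3 else 1) nbV.
rewrite cU /= in eU; rewrite cV /= in eV.
move: eU eV; move: #|C :&: U n| #|C :&: V n| => a b eU eV.
have h1 : 4 * a = n by lia.
have h2 : 4 * b = n by lia.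
split; [by []|split; [by []|]].
by rewrite -h1 mulnC modnMl.
Qed.
End Main.

Theorem mainTheorem10 (n : nat) (k : 'I_n) (C : {set gp_vertex n}) :
  3 <= n -> (k : nat) != 0 -> (2 * (k : nat)) %% n != 0 ->
  perfect_code n (k : nat) C ->
  4 * #|C :&: U n| = n /\ 4 * #|C :&: V n| = n /\ n %% 4 = 0.
Proof.
move=> n3 k0 k2 pc; exact: (@final n k C n3 k0 k2 pc).
Qed.
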